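(* Assume $r\ge n^{\kappa}$ for some sufficiently small constant $\kappa>0$ and condition (C1). If $l_n=o(n)$, then $\sup_{\omega\in[-\pi,\pi]}\max_{(i,j)\in\mathcal I}|\mathrm{I}_{i,j}(\omega)-\zeta_{i,j}(\omega)|=O_{\rm p}(l_n^2n^{-1}\log r)$.
   Context: $\{\mathbf x_t\}$ is a $p$-dimensional stationary time series with mean $\boldsymbol\mu$, $\mathring{\mathbf x}_t=\mathbf x_t-\boldsymbol\mu=(\mathring x_{1,t},\dots,\mathring x_{p,t})^\top$, $\boldsymbol\Gamma(k)=\{\gamma_{i,j}(k)\}=\mathrm{Cov}(\mathbf x_{t+k},\mathbf x_t)$, $\iota=\sqrt{-1}$. Observations $\mathbf x_1,\dots,\mathbf x_n$. Flat-top kernel with fixed $c\in(0,1]$: $\mathcal W(u)=1$ for $|u|\le c$, $(|u|-1)/(c-1)$ for $c<|u|\le1$, $0$ otherwise; integer bandwidth $l_n$ with $n>2l_n$. $\tilde{\boldsymbol\Gamma}(k)=n^{-1}\sum_{t=1}^{n-k}\mathring{\mathbf x}_{t+k}\mathring{\mathbf x}_t^\top$ for $k\ge0$ and $n^{-1}\sum_{t=-k+1}^{n}\mathring{\mathbf x}_{t+k}\mathring{\mathbf x}_t^\top$ for $k<0$. $\mathrm I(\omega)=\{\mathrm I_{i,j}(\omega)\}=(2\pi)^{-1}\sum_{k=-l_n}^{l_n}\mathcal W(k/l_n)\{\tilde{\boldsymbol\Gamma}(k)-\frac{n-|k|}{n}\boldsymbol\Gamma(k)\}e^{-\iota k\omega}$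 and $\zeta_{i,j}(\omega)=(2\pi n)^{-1}\sum_{t=l_n+1}^{n-l_n}\sum_{k=-l_n}^{l_n}\mathcal W(k/l_n)\{\mathring x_{i,t+k}\mathring x_{j,t}-\gamma_{i,j}(k)\}e^{-\iota k\omega}$. $\mathcal I\subset[p]^2$, $r=|\mathcal I|$; $p,r,l_n$ may depend on $n$, limits as $n\to\infty$. Condition (C1): there are constants $C_1>0$, $C_2>1$ independent of $n,p$ with $\mathbb E\exp(C_1|x_{j,t}|^2)\le C_2$ for all $t,j$. *)

(* Defs.v *)
From HB Require Import structures.
From mathcomp Require Import all_boot all_order all_algebra.
From mathcomp Require Import all_classical all_reals all_analysis.
Import Order.TTheory GRing.Theory Num.Theory.
Import numFieldNormedType.Exports.

Set Implicit Arguments.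
Unset Strict Implicit.
Unset Printing Implicit Defensive.

Local Open Scope ring_scope.

(* Conventions:
   - x n t j  : the j-th coordinate (j in 1..p n) at time t (t : nat) of the
                p_n-dimensional series of the n-th problem; observations are
                t = 1..n.
   - mu n j   : the mean of coordinate j; gam n i j k = gamma_{i,j}(k).
   - Complex numbers are written out through real and imaginary parts,
     e^{-i k w} = cos(k w) - i sin(k w). *)

Section Defs.
Variable R : realType.

Definition flat_top (c u : R) : R :=
  if `|u| <= c then 1
  else if `|u| <= 1 then (`|u| - 1) / (c - 1)
  else 0.

Variable xc : nat -> nat -> R.   (* centred series: xc j t = x_{j,t} - mu_j *)
Variable gam : nat -> nat -> int -> R.
Variables (c : R) (n l : nat).

(* the lagk k ranges over -l..l, enumerated as k = m - l, m < 2l+1 *)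
Definition lagk (m : nat) : int := (m%:Z - l%:Z)%R.

Definition tGamma (i j : nat) (k : int) : R :=
  match k with
  | Posz m => n%:R^-1 * \sum_(1 <= t < (n - m)%N.+1) xc i (t + m)%N * xc j t
  | Negz m' => n%:R^-1 *
      \sum_((m'.+1).+1 <= t < n.+1) xc i (t - m'.+1)%N * xc j t
  end.

Definition Wk (k : int) : R := flat_top c (k%:~R / l%:R).

Definition I_re (i j : nat) (w : R) : R :=
  (2 * pi)^-1 * \sum_(m < (2 * l).+1)
     Wk (lagk m) * (tGamma i j (lagk m)
                   - (n%:R - `|lagk m|%:R) / n%:R * gam i j (lagk m))
     * cos ((lagk m)%:~R * w).
Definition I_im (i j : nat) (w : R) : R :=
  (2 * pi)^-1 * \sum_(m < (2 * l).+1)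
     Wk (lagk m) * (tGamma i j (lagk m)
                   - (n%:R - `|lagk m|%:R) / n%:R * gam i j (lagk m))
     * (- sin ((lagk m)%:~R * w)).

(* time index t + k (t >= l+1 >= -k, so this is a natural number) *)
Definition tshift (t : nat) (k : int) : nat := `|(t%:Z + k)%R|%N.

Definition zeta_re (i j : nat) (w : R) : R :=
  (2 * pi * n%:R)^-1 * \sum_(l.+1 <= t < (n - l)%N.+1) \sum_(m < (2 * l).+1)
     Wk (lagk m) * (xc i (tshift t (lagk m)) * xc j t - gam i j (lagk m))
     * cos ((lagk m)%:~R * w).
Definition zeta_im (i j : nat) (w : R) : R :=
  (2 * pi * n%:R)^-1 * \sum_(l.+1 <= t < (n - l)%N.+1) \sum_(m < (2 * l).+1)
     Wk (lagk m) * (xc i (tshift t (lagk m)) * xc j t - gam i j (lagk m))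
     * (- sin ((lagk m)%:~R * w)).

Definition I_zeta_dist (i j : nat) (w : R) : R :=
  Num.sqrt ((I_re i j w - zeta_re i j w) ^+ 2 + (I_im i j w - zeta_im i j w) ^+ 2).

End Defs.

(* Main.v *)
Require Import Defs.
From HB Require Import structures.
From mathcomp Require Import all_boot all_order all_algebra.
From mathcomp Require Import all_classical all_reals all_analysis.
From mathcomp Require Import measurable_realfun.
From mathcomp Require Import zify ring lra.
Import Order.TTheory GRing.Theory Num.Theory.
Import numFieldNormedType.Exports.
Local Open Scope classical_set_scope.
Local Open Scope ring_scope.
Section Det.
Variable R : realType.

Lemma sum_abs_le (f : nat -> R) (B : R) (lo hi : nat) :
  (forall t, (lo <= t < hi)%N -> `|f t| <= B) ->
  `|\sum_(lo <= t < hi) f t| <= (hi - lo)%:R * B.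
Proof.
move=> hf; apply: (le_trans (ler_norm_sum _ _ _)).
apply: (le_trans (ler_sum_nat (G := fun _ => B) _)).
  by move=> t ht; exact: hf.
by rewrite sumr_const_nat mulr_natl.
Qed.

Lemma edge_bound (f : nat -> R) (g B : R) (lo a b hi : nat) :
  (lo <= a)%N -> (a <= b)%N -> (b <= hi)%N ->
  (forall t, (lo <= t < hi)%N -> `|f t| <= B) ->
  `|(\sum_(lo <= t < hi) f t - (hi - lo)%:R * g) - \sum_(a <= t < b) (f t - g)|
    <= ((a - lo) + (hi - b))%:R * (B + `|g|).
Proof.
move=> la ab bh hf.
rewrite (@big_cat_nat _ _ _ a lo hi _ _ la (leq_trans ab bh)) (@big_cat_nat _ _ _ b a hi _ _ ab bh) /=.
rewrite sumrB sumr_const_nat.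
have -> : (hi - lo)%:R = (a - lo)%:R + (b - a)%:R + (hi - b)%:R :> R.
  by rewrite -!natrD; congr (_%:R); lia.
set S1 := \sum_(lo <= i < a) f i.
set S2 := \sum_(a <= i < b) f i.
set S3 := \sum_(b <= i < hi) f i.
have -> : S1 + (S2 + S3) - ((a - lo)%:R + (b - a)%:R + (hi - b)%:R) * g
   - (S2 - g *+ (b - a)) = S1 + S3 - ((a - lo)%:R + (hi - b)%:R) * g.
  by rewrite -mulr_natr; ring.
have h1 : `|S1| <= (a - lo)%:R * B.
  apply: sum_abs_le => t /andP[h h']; apply: hf; apply/andP; split => //; lia.
have h3 : `|S3| <= (hi - b)%:R * B.
  apply: sum_abs_le => t /andP[h h']; apply: hf; apply/andP; split => //; lia.
apply: (le_trans (ler_normB _ _)).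
apply: (le_trans (lerD (ler_normD _ _) (lexx _))).
rewrite normrM ger0_norm ?addr_ge0 ?ler0n // natrD.
have : 0 <= (a - lo)%:R * B + (hi - b)%:R * B.
  exact: le_trans (addr_ge0 (normr_ge0 _) (normr_ge0 _)) (lerD h1 h3).
move=> _.
have := lerD h1 h3. move=> H.
rewrite mulrDr !mulrDl. lra.
Qed.
End Det.
Section Det2.
Variable R : realType.

Lemma Em_core (f : nat -> R) (g B2 G T : R) (n l lo hi ka : nat) :
  (0 < n)%N -> 0 <= B2 -> `|g| <= G ->
  (lo <= l.+1)%N -> ((n - l).+1 <= hi)%N -> (l.+1 <= (n - l).+1)%N ->
  (hi - lo + ka = n)%N -> ((l.+1 - lo) + (hi - (n - l).+1) <= 2 * l)%N ->
  T = n%:R^-1 * \sum_(lo <= t < hi) f t ->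
  (forall t, (lo <= t < hi)%N -> `|f t| <= B2) ->
  `|T - (n%:R - ka%:R) / n%:R * g - n%:R^-1 * \sum_(l.+1 <= t < (n - l).+1) (f t - g)|
    <= n%:R^-1 * ((2 * l)%:R * (B2 + G)).
Proof.
move=> n0 B0 gG hlo hhi hab hk hc -> hf.
have -> : (n%:R - ka%:R : R) = (hi - lo)%:R.
  by rewrite -natrB; [congr (_%:R) ; lia | lia].
have -> : n%:R^-1 * \sum_(lo <= t < hi) f t - (hi - lo)%:R / n%:R * g
   - n%:R^-1 * \sum_(l.+1 <= t < (n - l).+1) (f t - g) =
   n%:R^-1 * ((\sum_(lo <= t < hi) f t - (hi - lo)%:R * g)
     - \sum_(l.+1 <= t < (n - l).+1) (f t - g)) by rewrite /=; ring.
rewrite normrM ger0_norm ?invr_ge0 ?ler0n //.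
apply: ler_wpM2l; first by rewrite invr_ge0 ler0n.
apply: (le_trans (@edge_bound R f g B2 lo l.+1 (n - l).+1 hi hlo hab hhi hf)).
apply: ler_pM.
- exact: ler0n.
- exact: addr_ge0.
- by rewrite ler_nat.
- by rewrite lerD2l.
Qed.

Lemma tshift_pos (t mm : nat) : tshift t (Posz mm) = (t + mm)%N.
Proof. by rewrite /tshift -PoszD absz_nat. Qed.

Lemma tshift_neg (t m' : nat) : (m'.+1 <= t)%N -> tshift t (Negz m') = (t - m'.+1)%N.
Proof. by move=> h; rewrite /tshift NegzE subzn // absz_nat. Qed.

Lemma Em_bound (xc : nat -> nat -> R) (gam : nat -> nat -> int -> R)
    (n l i j m : nat) (B2 G : R) :
  (2 * l < n)%N -> (m < (2 * l).+1)%N -> 0 <= B2 -> `|gam i j (lagk l m)| <= G ->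
  (forall t t', (0 < t <= n)%N -> (0 < t' <= n)%N -> `|xc i t * xc j t'| <= B2) ->
  `|tGamma xc n i j (lagk l m)
     - (n%:R - (`|lagk l m|%N)%:R) / n%:R * gam i j (lagk l m)
     - n%:R^-1 * \sum_(l.+1 <= t < (n - l).+1)
         (xc i (tshift t (lagk l m)) * xc j t - gam i j (lagk l m))|
   <= n%:R^-1 * ((2 * l)%:R * (B2 + G)).
Proof.
move=> hn hm B0 hG hB.
have n0 : (0 < n)%N by lia.
have E0 : lagk l m = (m%:Z - l%:Z)%R by [].
move: hG E0; case: (lagk l m) => [mm|m'] hG E0.
- have hmm : (mm <= l)%N by lia.
  apply: (@Em_core (fun t => xc i (tshift t (Posz mm)) * xc j t) _ _ _ _ n l 1 (n - mm).+1) => //; try (rewrite /= ?absz_nat; lia).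
  move=> t /andP[h1 h2]; rewrite tshift_pos; apply: hB; apply/andP; split; lia.
- have hm' : (m' < l)%N by rewrite NegzE in E0; lia.
  apply: (@Em_core (fun t => xc i (tshift t (Negz m')) * xc j t) _ _ _ _ n l m'.+2 n.+1) => //; try (rewrite /=; lia).
  + rewrite /tGamma; congr (_ * _); apply: eq_big_nat => t /andP[h1 h2].
    by rewrite tshift_neg //; lia.
  + move=> t /andP[h1 h2]; rewrite tshift_neg; last by lia.
    apply: hB; apply/andP; split; lia.
Qed.
End Det2.
Section Det3.
Variable R : realType.

Lemma flat_top_le1 (c u : R) : 0 < c <= 1 -> `|flat_top c u| <= 1.
Proof.
move=> /andP[c0 c1]; rewrite /flat_top.
case: ifP => [_|hc]; first by rewrite normr1.
case: ifP => [hu|_]; last by rewrite normr0.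
have hcu : c < `|u| by rewrite ltNge hc.
have c1' : c < 1 by apply: lt_le_trans hcu hu.
have -> : (`|u| - 1) / (c - 1) = (1 - `|u|) / (1 - c).
  by rewrite -[c - 1]opprB -[`|u| - 1]opprB invrN mulrNN.
have h0 : 0 < 1 - c by rewrite subr_gt0.
rewrite ger0_norm; last by apply: divr_ge0; rewrite subr_ge0 // ltW.
by rewrite ler_pdivrMr // mul1r lerD2l lerN2 ltW.
Qed.

Lemma sqrt_sum_sq (a b : R) : Num.sqrt (a ^+ 2 + b ^+ 2) <= `|a| + `|b|.
Proof.
rewrite -[X in _ <= X]ger0_norm ?addr_ge0 // -sqrtr_sqr ler_sqrt; last first.
  exact: sqr_ge0.
rewrite -[a ^+ 2](real_normK (num_real a)) -[b ^+ 2](real_normK (num_real b)).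
have := normr_ge0 a; have := normr_ge0 b; nra.
Qed.

Lemma re_gen N (Wf D Z cs : 'I_N -> R) (b : R) :
  (forall m, `|Wf m| <= 1) -> (forall m, `|cs m| <= 1) ->
  (forall m, `|D m - Z m| <= b) ->
  `|(2 * pi)^-1 * \sum_(m < N) Wf m * D m * cs m
     - (2 * pi)^-1 * \sum_(m < N) Wf m * Z m * cs m| <= (2 * pi)^-1 * (N%:R * b).
Proof.
move=> hW hc hD.
have p0 : 0 <= (2 * pi : R)^-1 by rewrite invr_ge0 mulr_ge0 ?pi_ge0.
rewrite -mulrBr -sumrB normrM ger0_norm //; apply: ler_wpM2l => //.
apply: (le_trans (ler_norm_sum _ _ _)).
have -> : N%:R * b = \sum_(m < N) b by rewrite sumr_const card_ord mulr_natl.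
apply: ler_sum => m _.
have -> : Wf m * D m * cs m - Wf m * Z m * cs m = Wf m * (D m - Z m) * cs m by ring.
rewrite !normrM.
have h1 : `|Wf m| * `|cs m| <= 1.
  by apply: (le_trans (ler_pM (normr_ge0 _) (normr_ge0 _) (hW m) (hc m))); rewrite mulr1.
rewrite mulrAC mulrC; apply: le_trans (hD m).
by rewrite -[X in _ <= X]mulr1; apply: ler_wpM2l.
Qed.
End Det3.
Section Det4.
Variable R : realType.
Variables (xc : nat -> nat -> R) (gam : nat -> nat -> int -> R) (c : R) (n l i j : nat).

Definition Zt (m : nat) : R :=
  n%:R^-1 * \sum_(l.+1 <= t < (n - l).+1)
     (xc i (tshift t (lagk l m)) * xc j t - gam i j (lagk l m)).

Lemma zeta_re_eq w : zeta_re xc gam c n l i j w =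
  (2 * pi)^-1 * \sum_(m < (2 * l).+1) Wk c l (lagk l m) * Zt m * cos ((lagk l m)%:~R * w).
Proof.
rewrite /zeta_re exchange_big /= invfM -mulrA; congr (_ * _).
rewrite mulr_sumr; apply: eq_bigr => m _.
by rewrite /Zt -mulr_suml -mulr_sumr; ring.
Qed.

Lemma zeta_im_eq w : zeta_im xc gam c n l i j w =
  (2 * pi)^-1 * \sum_(m < (2 * l).+1) Wk c l (lagk l m) * Zt m * (- sin ((lagk l m)%:~R * w)).
Proof.
rewrite /zeta_im exchange_big /= invfM -mulrA; congr (_ * _).
rewrite mulr_sumr; apply: eq_bigr => m _.
by rewrite /Zt -mulr_suml -mulr_sumr; ring.
Qed.

Lemma dist_bound w B2 G :
  0 < c <= 1 -> (2 * l < n)%N -> 0 <= B2 ->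
  (forall m, (m < (2 * l).+1)%N -> `|gam i j (lagk l m)| <= G) ->
  (forall t t', (0 < t <= n)%N -> (0 < t' <= n)%N -> `|xc i t * xc j t'| <= B2) ->
  I_zeta_dist xc gam c n l i j w <=
    2 * ((2 * pi)^-1 * ((2 * l).+1%:R * (n%:R^-1 * ((2 * l)%:R * (B2 + G))))).
Proof.
move=> hc hn B0 hG hB.
have hD : forall m : 'I_(2 * l).+1,
  `|(tGamma xc n i j (lagk l m) - (n%:R - (`|lagk l m|%N)%:R) / n%:R * gam i j (lagk l m))
    - Zt m| <= n%:R^-1 * ((2 * l)%:R * (B2 + G)).
  by move=> m; apply: Em_bound => //; apply: hG.
have hW : forall m : 'I_(2 * l).+1, `|Wk c l (lagk l m)| <= 1.
  by move=> m; apply: flat_top_le1.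
have H1 := @re_gen R (2 * l).+1 (fun m => Wk c l (lagk l m))
  (fun m => tGamma xc n i j (lagk l m) - (n%:R - (`|lagk l m|%N)%:R) / n%:R * gam i j (lagk l m))
  (fun m => Zt m) (fun m => cos ((lagk l m)%:~R * w)) _ hW (fun m => cos_max _) hD.
have H2 := @re_gen R (2 * l).+1 (fun m => Wk c l (lagk l m))
  (fun m => tGamma xc n i j (lagk l m) - (n%:R - (`|lagk l m|%N)%:R) / n%:R * gam i j (lagk l m))
  (fun m => Zt m) (fun m => - sin ((lagk l m)%:~R * w)) _ hW
  (fun m => ltac:(by rewrite normrN; exact: sin_max)) hD.
rewrite /I_zeta_dist; apply: (le_trans (@sqrt_sum_sq R _ _)).
rewrite zeta_re_eq zeta_im_eq.
move: H1 H2; rewrite /=.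
set X := (2 * pi)^-1 * _.
move=> H1 H2.
have := lerD H1 H2. rewrite /I_re /I_im. lra.
Qed.
End Det4.
Section Prob.
Variables (R : realType) (d : measure_display) (T : measurableType d)
  (P : probability T R).

Lemma mexp (C1 : R) (Y : {RV P >-> R}) :
  measurable_fun setT (fun w => expR (C1 * `|Y w| ^+ 2)).
Proof.
apply: (measurableT_comp (@measurable_expR R)).
apply: measurable_funM; first exact: measurable_cst.
apply: measurable_funX.
exact: (measurableT_comp (@normr_measurable R setT) (measurable_funPT Y)).
Qed.

Ltac solve_side := first [ by move=> ? _; rewrite lee_fin
  | by move=> ? _; rewrite -EFinM lee_fin mulr_ge0
  | (apply/measurable_EFinP; apply: measurable_funM => //; exact: measurable_cst)
  | exact/measurable_EFinP
  | by match goal with H : is_true (0 <= ?x) |- _ => move: H; rewrite -lee_fin end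
  | exact: measurable_cst ].

Lemma int_le (f h : T -> R) (a b H : R) :
  measurable_fun setT f -> measurable_fun setT h ->
  (forall w, 0 <= f w) -> (forall w, 0 <= h w) -> 0 <= a -> 0 <= b ->
  (forall w, f w <= a + b * h w) ->
  (\int[P]_w (h w)%:E <= H%:E)%E ->
  (\int[P]_w (f w)%:E <= (a + b * H)%:E)%E.
Proof.
move=> mf mh f0 h0 a0 b0 fh hH.
apply: (@le_trans _ _ (\int[P]_w ((a + b * h w)%:E))%E).
  apply: ge0_le_integral => //.
  - by move=> w _; rewrite lee_fin.
  - exact/measurable_EFinP.
  - apply/measurable_EFinP; apply: measurable_funD; first exact: measurable_cst.
    by apply: measurable_funM => //; exact: measurable_cst.
  - by move=> w _; rewrite lee_fin.
under eq_integral do rewrite EFinD EFinM.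
rewrite ge0_integralD //; try solve_side.
rewrite integral_cst //.
set u := (X in (a%:E * X)%E).
have -> : u = 1%E by exact: (probability_setT P).
rewrite mule1 ge0_integralZl //; try solve_side.
rewrite EFinD EFinM; apply: leeD2l; apply: lee_wpmul2l => //; solve_side.
Qed.

Lemma sq_le (y C1 : R) : 0 < C1 -> `|y| ^+ 2 <= C1^-1 * expR (C1 * `|y| ^+ 2).
Proof.
move=> c1; rewrite ler_pdivlMl //.
have := expR_ge1Dx (C1 * `|y| ^+ 2); lra.
Qed.

Lemma ptwise (y C1 : R) : 0 < C1 -> `|y| <= 1 + C1^-1 * expR (C1 * `|y| ^+ 2).
Proof.
move=> c1; have := @sq_le y C1 c1; have := normr_ge0 y; nra.
Qed.

Lemma mu_bnd (C1 C2 : R) (Y : {RV P >-> R}) (mu : R) : 0 < C1 -> ('E_P[Y] = mu%:E)%E ->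
  ('E_P[fun w => expR (C1 * `|Y w| ^+ 2)] <= C2%:E)%E -> `|mu| <= 1 + C1^-1 * C2.
Proof.
move=> c1 EY eY.
have mY := measurable_funPT Y.
rewrite -lee_fin -abse_EFin -EY expectation_def.
apply: (le_trans (le_abse_integral _ _ _)) => //; first exact/measurable_EFinP.
under eq_integral do rewrite abse_EFin.
apply: (@int_le (fun w => `|Y w|) (fun w => expR (C1 * `|Y w| ^+ 2)) 1 C1^-1 C2).
- exact: (measurableT_comp (@normr_measurable R setT) mY).
- exact: mexp.
- by move=> w; exact: normr_ge0.
- by move=> w; exact: expR_ge0.
- exact: ler01.
- by rewrite invr_ge0 ltW.
- by move=> w /=; exact: ptwise.
- by move: eY; rewrite expectation.unlock.
Qed.

Lemma tail (C1 C2 : R) (Y : {RV P >-> R}) (s : R) : 0 < C1 -> 0 < s ->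
  ('E_P[fun w => expR (C1 * `|Y w| ^+ 2)] <= C2%:E)%E ->
  (P [set w | (s <= `|Y w|)%R] <= (C2 / expR (C1 * s ^+ 2))%:E)%E.
Proof.
move=> c1 s0 eY.
have mf : measurable_fun setT (fun x : R => expR (C1 * x ^+ 2)).
  apply: (measurableT_comp (@measurable_expR R)).
  apply: measurable_funM; first exact: measurable_cst.
  exact: exprn_measurable.
have f0 : forall r : R, 0 <= r -> 0 <= expR (C1 * r ^+ 2) by move=> *; exact: expR_ge0.
have fnd : {in Num.nneg &, {homo (fun x : R => expR (C1 * x ^+ 2)) : x y / x <= y}}.
  move=> x y x0 y0 xy; rewrite ler_expR.
  by apply: ler_wpM2l; [exact: ltW | exact: lerXn2r].
have H := markov Y s0 mf f0 fnd.
have E : [set x | (s%:E <= `|(Y x)%:E|)%E] = [set w | (s <= `|Y w|)%R].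
  by apply: eq_set => w; rewrite abse_EFin lee_fin.
rewrite E in H.
have H' := le_trans H eY.
rewrite mulrC EFinM lee_pdivlMl //; exact: expR_gt0.
Qed.

Lemma ev_meas (Y : {RV P >-> R}) (s : R) : measurable [set w | s <= `|Y w|].
Proof.
have mY := measurableT_comp (@normr_measurable R setT) (measurable_funPT Y).
suff -> : [set w | s <= `|Y w|] = setT `&` ((fun w => `|Y w|) @^-1` [set` `[s, +oo[%R])
  by exact: (mY measurableT _ (measurable_itv _)).
by rewrite setTI; apply: eq_set => w; rewrite /preimage /= in_itv /= andbT.
Qed.

Lemma bigU_meas (I : Type) (s : seq I) (F : I -> set T) :
  (forall i, measurable (F i)) -> measurable (\big[setU/set0]_(i <- s) F i).
Proof.
move=> hF; elim: s => [|x s IH]; first by rewrite big_nil; exact: measurable0.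
by rewrite big_cons; exact: measurableU.
Qed.

Lemma bigU_le (I : eqType) (s : seq I) (F : I -> set T) (b : R) :
  (forall i, measurable (F i)) -> (forall i, i \in s -> (P (F i) <= b%:E)%E) ->
  (P (\big[setU/set0]_(i <- s) F i) <= ((size s)%:R * b)%:E)%E.
Proof.
move=> hF; elim: s => [|x s IH] hb; first by rewrite big_nil measure0 mul0r.
rewrite big_cons.
have H : (P (F x `|` \big[setU/set0]_(j <- s) F j) <=
  P (F x) + P (\big[setU/set0]_(j <- s) F j))%E.
  exact: (measureU2 P (hF x) (@bigU_meas _ s F hF)).
apply: (le_trans H).
have -> : ((size (x :: s))%:R * b)%:E = (b%:E + ((size s)%:R * b)%:E)%E.
  by rewrite -EFinD; congr (_%:E); rewrite /= -addn1 natrD; ring.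
apply: leeD; first by apply: hb; exact: mem_head.
by apply: IH => i hi; apply: hb; rewrite inE hi orbT.
Qed.

Lemma bigU_notin (I : eqType) (s : seq I) (F : I -> set T) w :
  ~ (\big[setU/set0]_(i <- s) F i) w -> forall i, i \in s -> ~ F i w.
Proof.
elim: s => [|x s IH] //= H i; rewrite big_cons in H.
rewrite inE => /orP[/eqP -> | his] Fi; apply: H; first by left.
right; apply: contrapT => nr; exact: (IH nr i his Fi).
Qed.

Lemma cov_bnd (C1 C2 : R) (Y Z : {RV P >-> R}) (mY mZ g : R) : 0 < C1 ->
  ('E_P[Y] = mY%:E)%E -> ('E_P[Z] = mZ%:E)%E ->
  ('E_P[fun w => expR (C1 * `|Y w| ^+ 2)] <= C2%:E)%E ->
  ('E_P[fun w => expR (C1 * `|Z w| ^+ 2)] <= C2%:E)%E ->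
  covariance P Y Z = g%:E -> `|g| <= (mY ^+ 2 + mZ ^+ 2) + C1^-1 * (C2 + C2).
Proof.
move=> c1 EY EZ eY eZ cv.
have mY' := measurable_funPT Y; have mZ' := measurable_funPT Z.
have mprod : measurable_fun setT (fun w => (Y w - mY) * (Z w - mZ)).
  by apply: measurable_funM; apply: measurable_funB => //; exact: measurable_cst.
rewrite -lee_fin -abse_EFin -cv covariance.unlock EY EZ /= expectation.unlock.
apply: (le_trans (le_abse_integral _ _ _)) => //; first exact/measurable_EFinP.
under eq_integral do rewrite abse_EFin.
apply: (@int_le (fun w => `|(Y w - mY) * (Z w - mZ)|)
  (fun w => expR (C1 * `|Y w| ^+ 2) + expR (C1 * `|Z w| ^+ 2))
  (mY ^+ 2 + mZ ^+ 2) C1^-1 (C2 + C2)).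
- exact: (measurableT_comp (@normr_measurable R setT) mprod).
- by apply: measurable_funD; exact: mexp.
- by move=> w; exact: normr_ge0.
- by move=> w; apply: addr_ge0; exact: expR_ge0.
- by apply: addr_ge0; exact: sqr_ge0.
- by rewrite invr_ge0 ltW.
- move=> w /=.
  have h1 := @sq_le (Y w) C1 c1; have h2 := @sq_le (Z w) C1 c1.
  have e1 := real_normK (num_real (Y w)); have e2 := real_normK (num_real (Z w)).
  have e3 := real_normK (num_real (Y w - mY)); have e4 := real_normK (num_real (Z w - mZ)).
  have := sqr_ge0 (`|Y w - mY| - `|Z w - mZ|).
  have := sqr_ge0 (Y w + mY); have := sqr_ge0 (Z w + mZ).
  rewrite normrM mulrDr.
  move: h1 h2 e1 e2 e3 e4.
  set A := C1^-1 * _; set B := C1^-1 * _.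
  nra.
- under eq_integral do rewrite EFinD.
  rewrite ge0_integralD //; try (by move=> ? _; rewrite lee_fin expR_ge0);
    try (exact/measurable_EFinP/mexp).
  rewrite EFinD; apply: leeD; by [move: eY; rewrite expectation.unlock |
      move: eZ; rewrite expectation.unlock].
Qed.
End Prob.

Lemma bigmax_le_seq (R : realType) (I : eqType) (s : seq I) (f : I -> R) (v : R) :
  0 <= v -> (forall i, i \in s -> f i <= v) -> \big[Num.max/0]_(i <- s) f i <= v.
Proof.
move=> v0; elim: s => [|x s IH] hf; rewrite ?big_nil ?big_cons //.
rewrite ge_max; apply/andP; split; first by apply: hf; exact: mem_head.
by apply: IH => i hi; apply: hf; rewrite inE hi orbT.
Qed.

Lemma near_test (Q : nat -> Prop) : (\forall n \near \oo, Q n) -> exists N, forall n, (N <= n)%N -> Q n.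
Proof. move=> [N _ HN]; exists N => n hn; exact: HN. Qed.

Lemma near_test2 (Q : nat -> Prop) N : (forall n, (N <= n)%N -> Q n) -> (\forall n \near \oo, Q n).
Proof. move=> HN; exists N => //. Qed.
Arguments bigU_notin {d T I s F w}.
Arguments bigU_meas {d T I s F}.
Lemma my_lnK (R : realType) (x : R) : 0 < x -> expR (ln x) = x.
Proof. by move=> h; rewrite lnK. Qed.
Lemma arith_B (R : realType) (s m0 G K Q : R) : s ^+ 2 = K * Q -> 1 <= Q ->
  0 <= 2 * m0 ^+ 2 + G -> (s + m0) ^+ 2 + G <= (2 * K + 2 * m0 ^+ 2 + G) * Q.
Proof.
move=> s2 Q1 hm.
have hQ1 : 0 <= Q - 1 by rewrite subr_ge0.
have := mulr_ge0 hm hQ1; have := sqr_ge0 (s - m0); nra.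
Qed.

Lemma arith_L (R : realType) (L : R) : 0 <= L -> L <= L * L ->
  (2 * L + 1) * (2 * L) <= 6 * (L * L).
Proof. move=> *; nra. Qed.

Lemma arith_fin (R : realType) (pinv Xx V Y : R) : pinv * Xx <= Xx -> Xx <= 6 * V ->
  0 <= Y -> 2 * (pinv * Xx) <= 12 * V + Y.
Proof. move=> *; lra. Qed.

Lemma final_arith (R : realType) (pinv L u Bs Kc Q : R) : 0 <= pinv -> pinv <= 1 ->
  0 <= L -> L <= L * L -> 0 < u -> 0 <= Bs -> Bs <= Kc * Q -> 0 <= Kc -> 0 <= Q ->
  2 * (pinv * ((2 * L + 1) * (u * (2 * L * Bs)))) <= (12 * Kc + 1) * (L ^+ 2 * u * Q).
Proof.
move=> p0 p1 L0 hL u0 B0 hB Kc0 Q0.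
set Xx := (2 * L + 1) * (u * (2 * L * Bs)).
have X0 : 0 <= Xx.
  rewrite /Xx; apply: mulr_ge0; first by rewrite addr_ge0 ?mulr_ge0.
  by rewrite mulr_ge0 ?(ltW u0) // !mulr_ge0.
have h1 : pinv * Xx <= Xx by rewrite -[X in _ <= X]mul1r; apply: ler_wpM2r.
have hLL := @arith_L R L L0 hL.
have h2 : u * Bs <= u * (Kc * Q) by apply: ler_wpM2l => //; exact: ltW.
have h3 : Xx <= 6 * (L * L) * (u * (Kc * Q)).
  rewrite /Xx (_ : (2 * L + 1) * (u * (2 * L * Bs)) = ((2 * L + 1) * (2 * L)) * (u * Bs)); last by ring.
  apply: ler_pM => //; first by rewrite mulr_ge0 ?addr_ge0 ?mulr_ge0.
  by rewrite mulr_ge0 ?(ltW u0).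
have -> : (12 * Kc + 1) * (L ^+ 2 * u * Q) = 12 * (Kc * (L * L * u * Q)) + L * L * u * Q.
  by rewrite expr2; ring.
have Z : 6 * (L * L) * (u * (Kc * Q)) = 6 * (Kc * (L * L * u * Q)) by ring.
have W1 : 0 <= L * L * u * Q by rewrite !mulr_ge0 ?(ltW u0).
rewrite Z in h3.
exact: arith_fin.
Qed.

Lemma two_pi_ge1 (R : realType) : 1 <= 2 * (pi : R).
Proof. have := @pi_ge2 R; lra. Qed.
Theorem lemmaL2 (R : realType) (d : measure_display) (T : measurableType d)
  (P : probability T R)
  (p l : nat -> nat) (Ind : nat -> seq (nat * nat))
  (X : nat -> nat -> nat -> {RV P >-> R})
  (mu : nat -> nat -> R) (gam : nat -> nat -> nat -> int -> R)
  (c C1 C2 : R) :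
  0 < c <= 1 ->
  (forall n, uniq (Ind n) /\
     all (fun ij => (0 < ij.1 <= p n)%N && (0 < ij.2 <= p n)%N) (Ind n)) ->
  (* stationarity: constant mean, covariances depending only on the lag *)
  (forall n t j, (0 < j <= p n)%N -> ('E_P[X n t j] = (mu n j)%:E)%E) ->
  (forall n i j (t : nat) (k : int), (0 < i <= p n)%N -> (0 < j <= p n)%N ->
     0 <= t%:Z + k ->
     covariance P (X n (tshift t k) i) (X n t j) = (gam n i j k)%:E) ->
  (* condition (C1) *)
  0 < C1 -> 1 < C2 ->
  (forall n t j, (0 < j <= p n)%N ->
     ('E_P[fun w => expR (C1 * `|X n t j w| ^+ 2)] <= C2%:E)%E) ->
  (* r >= n^kappa for some kappa > 0 *)
  (exists kappa : R, 0 < kappa /\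
     forall n : nat, n%:R `^ kappa <= (size (Ind n))%:R) ->
  (* n > 2 l_n and l_n = o(n) *)
  (\forall n \near \oo, (2 * l n < n)%N) ->
  (fun n => (l n)%:R / n%:R : R) @ \oo --> 0 ->
  (* conclusion: sup_w max_{(i,j) in I} |I_{i,j}(w) - zeta_{i,j}(w)|
     = O_p(l_n^2 n^{-1} log r)  (outer-probability form) *)
  forall eps : R, 0 < eps ->
  exists M : R, 0 < M /\
  \forall n \near \oo, exists A : set T, measurable A /\
    [set w | exists om : R, - pi <= om <= pi /\
       M * ((l n)%:R ^+ 2 / n%:R * ln (size (Ind n))%:R) <
       \big[Num.max/0]_(ij <- Ind n)
          I_zeta_dist (fun j t => X n t j w - mu n j) (gam n) c n (l n)
                      ij.1 ij.2 om] `<=` A /\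
    (P A <= eps%:E)%E.
Proof.
move=> hc hInd hmu hcov C1p C2p hexp [kappa [k0 hkap]] hnl _ eps eps0.
have hC1i : 0 <= C1^-1 by rewrite invr_ge0 ltW.
have C2p0 : 0 < C2 by apply: lt_trans C2p; exact: ltr01.
set m0 := 1 + C1^-1 * C2.
set G := (m0 ^+ 2 + m0 ^+ 2) + C1^-1 * (C2 + C2).
have Hmu : forall n j, (0 < j <= p n)%N -> `|mu n j| <= m0.
  move=> n j hj.
  exact: (@mu_bnd R d T P C1 C2 (X n 0%N j) (mu n j) C1p (hmu n 0%N j hj) (hexp n 0%N j hj)).
have HG : forall n i j k, (0 < i <= p n)%N -> (0 < j <= p n)%N -> `|gam n i j k| <= G.
  move=> n i j k hi hj.
  have tk : 0 <= (`|k|%N)%:Z + k by case: k => [k|k]; rewrite ?NegzE; lia.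
  have := @cov_bnd R d T P C1 C2 (X n (tshift `|k|%N k) i) (X n `|k|%N j) (mu n i) (mu n j)
    (gam n i j k) C1p (hmu _ _ _ hi) (hmu _ _ _ hj) (hexp _ _ _ hi) (hexp _ _ _ hj)
    (hcov n i j `|k|%N k hi hj tk).
  have a := Hmu n i hi; have b := Hmu n j hj.
  have ea := real_normK (num_real (mu n i)); have eb := real_normK (num_real (mu n j)).
  have := normr_ge0 (mu n i); have := normr_ge0 (mu n j).
  rewrite /G; nra.
set K := (2 + kappa^-1) / C1.
have K0 : 0 < K by apply: divr_gt0 => //; apply: addr_gt0 => //; rewrite invr_gt0.
have G0 : 0 <= G.
  rewrite /G; apply: addr_ge0; first by apply: addr_ge0; exact: sqr_ge0.
  by apply: mulr_ge0 => //; lra.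
set Kc := 2 * K + 2 * m0 ^+ 2 + G.
have Kc0 : 0 <= Kc by rewrite /Kc; have := sqr_ge0 m0; lra.
have M0 : 0 <= 12 * Kc + 1 by lra.
exists (12 * Kc + 1); split; first by lra.
set Bd := expR 1 + 2 * C2 / eps.
have Bd0 : 0 < Bd.
  by rewrite /Bd; apply: addr_gt0; [exact: expR_gt0 | apply: divr_gt0 => //; lra].
have [N1 HN1] := near_test _ hnl.
set N2 := Num.Def.archi_bound (expR (ln Bd / kappa)).
apply: (@near_test2 _ (maxn N1 N2)) => n hn.
have hn1 : (2 * l n < n)%N by apply: HN1; exact: leq_trans (leq_maxl _ _) hn.
have hN2 : (N2 <= n)%N by exact: leq_trans (leq_maxr _ _) hn.
have npos : (0 < n)%N by lia.
have nR0 : 0 < n%:R :> R by rewrite ltr0n.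
have hn2 : expR (ln Bd / kappa) < n%:R.
  apply: (lt_le_trans (archi_boundP (expR_ge0 _))); by rewrite ler_nat.
have powE : n%:R `^ kappa = expR (kappa * ln n%:R).
  by rewrite /powR (negbTE (lt0r_neq0 nR0)).
have hk := hkap n.
rewrite powE in hk.
set rr := (size (Ind n))%:R : R.
have rr0 : 0 < rr by apply: lt_le_trans hk; exact: expR_gt0.
have lnn : ln Bd / kappa <= ln n%:R.
  rewrite -[X in X <= _](expRK (ln Bd / kappa)) ler_ln ?posrE ?expR_gt0 //.
  exact: ltW.
have rrBd : Bd <= rr.
  apply: le_trans hk.
  rewrite -ler_ln ?posrE ?expR_gt0 // expRK mulrC -ler_pdivrMr //.
have lnr1 : 1 <= ln rr.
  have h : expR 1 <= rr.
    apply: le_trans rrBd; rewrite /Bd lerDl; apply: divr_ge0; lra.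
  by rewrite -(expRK 1) ler_ln ?posrE ?expR_gt0.
have rreps : 2 * C2 / eps <= rr by apply: le_trans rrBd; rewrite /Bd lerDr expR_ge0.
have nE : n%:R <= expR (ln rr / kappa).
  have h : kappa * ln n%:R <= ln rr.
    by rewrite -[X in X <= _](expRK (kappa * ln n%:R)) ler_ln ?posrE ?expR_gt0.
  by rewrite -ler_ln ?posrE ?expR_gt0 // expRK ler_pdivlMr // mulrC.
set Q := ln rr.
set s := Num.sqrt (K * Q).
have KQ0 : 0 < K * Q by apply: mulr_gt0 => //; exact: lt_le_trans ltr01 lnr1.
have s0 : 0 < s by rewrite sqrtr_gt0.
have s2 : s ^+ 2 = K * Q by rewrite sqr_sqrtr // ltW.
pose EE := fun (ij : nat * nat) (t : nat) =>
  [set w | (s <= `|X n t ij.1 w|)%R] `|` [set w | (s <= `|X n t ij.2 w|)%R].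
have mEE : forall ij t, measurable (EE ij t).
  by move=> ij t; apply: measurableU; exact: ev_meas.
exists (\big[setU/set0]_(ij <- Ind n) \big[setU/set0]_(t <- iota 1 n) EE ij t).
split; [|split].
- by apply: bigU_meas => ij; apply: bigU_meas => t; exact: mEE.
- move=> w [om [hom hlt]].
  apply: contrapT => nA.
  have good : forall ij, ij \in Ind n -> forall t, (0 < t <= n)%N ->
      `|X n t ij.1 w| < s /\ `|X n t ij.2 w| < s.
    move=> ij hij t ht.
    have h1 := bigU_notin nA _ hij.
    have ht' : t \in iota 1 n by rewrite mem_iota add1n ltnS.
    have h2 := bigU_notin h1 _ ht'.
    by split; rewrite ltNge; apply/negP => h; apply: h2; [left | right].
  move: hlt; rewrite ltNge => /negP; apply.
  have Q0 : 0 <= Q by exact: le_trans ler01 lnr1.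
  set L := (l n)%:R.
  have L0 : 0 <= L by exact: ler0n.
  have u0 : 0 < n%:R^-1 :> R by rewrite invr_gt0.
  have W0 : 0 <= L ^+ 2 / n%:R * Q.
    by apply: mulr_ge0 => //; apply: mulr_ge0; [exact: sqr_ge0 | exact: ltW].
  apply: bigmax_le_seq; first exact: mulr_ge0 M0 W0.
  move=> ij hij.
  have /andP[hi hj] := allP (proj2 (hInd n)) ij hij.
  have hB2 : forall t t', (0 < t <= n)%N -> (0 < t' <= n)%N ->
     `|(X n t ij.1 w - mu n ij.1) * (X n t' ij.2 w - mu n ij.2)| <= (s + m0) ^+ 2.
    move=> t t' ht ht'.
    have [a1 _] := good ij hij t ht; have [_ b1] := good ij hij t' ht'.
    rewrite normrM expr2; apply: ler_pM; try exact: normr_ge0.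
    + apply: (le_trans (ler_normB _ _)); apply: lerD; [exact: ltW | exact: Hmu].
    + apply: (le_trans (ler_normB _ _)); apply: lerD; [exact: ltW | exact: Hmu].
  apply: (le_trans (@dist_bound R (fun j t => X n t j w - mu n j) (gam n) c n (l n)
     ij.1 ij.2 om ((s + m0) ^+ 2) G hc hn1 (sqr_ge0 _)
     (fun m _ => HG n ij.1 ij.2 _ hi hj) hB2)).
  have e1 : ((2 * l n).+1)%:R = 2 * L + 1 :> R by rewrite -addn1 natrD natrM.
  have e2 : ((2 * l n)%:R : R) = 2 * L by rewrite natrM.
  rewrite e1 e2.
  have hL : L <= L * L by rewrite /L -natrM ler_nat; case: (l n) => // k; exact: leq_pmulr.
  have hB : (s + m0) ^+ 2 + G <= Kc * Q.
    rewrite /Kc; apply: arith_B => //.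
    by apply: addr_ge0 => //; apply: mulr_ge0 => //; exact: sqr_ge0.
  apply: final_arith => //.
  - by rewrite invr_ge0 mulr_ge0 ?pi_ge0.
  - rewrite invf_le1; last by rewrite mulr_gt0 ?pi_gt0.
    exact: two_pi_ge1.
  - by apply: addr_ge0 => //; exact: sqr_ge0.
- set q := C2 / expR (C1 * s ^+ 2).
  have hq : forall ij, ij \in Ind n -> forall t, (P (EE ij t) <= (q + q)%:E)%E.
    move=> ij hij t.
    have /andP[h1 h2] := allP (proj2 (hInd n)) ij hij.
    have H : (P (EE ij t) <= P [set w | (s <= `|X n t ij.1 w|)%R]
                 + P [set w | (s <= `|X n t ij.2 w|)%R])%E.
      exact: (measureU2 P (@ev_meas R d T P _ s) (@ev_meas R d T P _ s)).
    apply: (le_trans H); rewrite EFinD; apply: leeD.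
    + exact: (@tail R d T P C1 C2 _ s C1p s0 (hexp n t _ h1)).
    + exact: (@tail R d T P C1 C2 _ s C1p s0 (hexp n t _ h2)).
  have inner : forall ij, ij \in Ind n ->
      (P (\big[setU/set0]_(t <- iota 1 n) EE ij t) <= ((size (iota 1 n))%:R * (q + q))%:E)%E.
    move=> ij hij; apply: bigU_le => [t|t _]; [exact: mEE | exact: hq].
  apply: (le_trans (@bigU_le R d T P _ (Ind n) _ _
      (fun ij => bigU_meas (fun t => mEE ij t)) inner)).
  rewrite lee_fin size_iota.
  have Epos : 0 < expR (Q / kappa) by exact: expR_gt0.
  have eq1 : expR (C1 * s ^+ 2) = rr * rr * expR (Q / kappa).
    rewrite s2 /K.
    have -> : C1 * ((2 + kappa^-1) / C1 * Q) = Q + Q + Q / kappa.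
      by field; rewrite ?gt_eqF.
    by rewrite !expRD /Q my_lnK.
  have -> : rr * (n%:R * (q + q)) = (2 * C2 / rr) * (n%:R / expR (Q / kappa)).
    rewrite /q eq1; field; rewrite ?gt_eqF //.
  have h1 : n%:R / expR (Q / kappa) <= 1 by rewrite ler_pdivrMr // mul1r.
  have h2 : 2 * C2 / rr <= eps.
    by rewrite ler_pdivrMr // [eps * rr]mulrC -ler_pdivrMr.
  apply: (le_trans _ h2); rewrite -[X in _ <= X]mulr1; apply: ler_wpM2l => //.
  by apply: divr_ge0; lra.
Qed.
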